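(* The set $H:=\{x\in 3^\omega:\exists^\infty n\,(x(n)=2)\}$ is $\mathbb{T}$-comeager; consequently a set $X\subseteq 3^\omega$ is $\mathbb{T}$-measurable iff $X\cap H$ is $\mathbb{T}$-measurable.
   Context: $\mathbb{T}$ is the tree-forcing (ordered by inclusion) consisting of perfect trees $p\subseteq 3^{<\omega}$ together with a set $A_p\subseteq\omega$ (the splitting levels of $p$) such that: for every $t\in p$, $|t|\in A_p$ iff $t$ is a splitting node of $p$; every splitting node $t$ is fully splitting (i.e. $t^\frown i\in p$ for every $i\in 3$); for every $s\supseteq \mathrm{stem}(p)$ which is not splitting, $s^\frown 2\notin p$; and for all non-splitting $s,t\in p$ with $|s|=|t|$ and all $i\in 2$, $s^\frown i\in p\Leftrightarrow t^\frown i\in p$. Here $s^\frown i$ denotes $s$ extended by the value $i$. $X$ is $\mathbb{T}$-nowhere dense if every $p$ has $q\leq p$ with $[q]\cap X=\emptyset$; $\mathbb{T}$-meager means a countable union of such sets; $X$ is $\mathbb{T}$-measurable if every $p$ has $q\leq p$ with $[q]\cap X$ or $[q]\setminus X$ $\mathbb{T}$-meager. *)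

(* Defs.v *)
From mathcomp Require Import all_boot.
Set Implicit Arguments. Unset Strict Implicit. Unset Printing Implicit Defensive.

Definition node := seq 'I_3.
Definition point := nat -> 'I_3.
Definition tree := node -> Prop.
Definition pset := point -> Prop.

Definition splitting (p : tree) (t : node) : Prop :=
  p t /\ exists i j : 'I_3, i != j /\ p (rcons t i) /\ p (rcons t j).

Definition fully_splitting (p : tree) (t : node) : Prop :=
  forall i : 'I_3, p (rcons t i).

Definition perfect_tree (p : tree) : Prop :=
  p [::] /\
  (forall s t : node, p t -> prefix s t -> p s) /\
  (forall t, p t -> exists i : 'I_3, p (rcons t i)) /\
  (forall t, p t -> exists s, prefix t s /\ splitting p s).

Definition is_stem (p : tree) (t : node) : Prop :=
  splitting p t /\ forall s, p s -> prefix t s \/ prefix s t.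

Definition Tcond (p : tree) (A : nat -> Prop) : Prop :=
  perfect_tree p /\
  (forall t, p t -> (A (size t) <-> splitting p t)) /\
  (forall t, splitting p t -> fully_splitting p t) /\
  (forall st s, is_stem p st -> p s -> prefix st s -> ~ splitting p s ->
      ~ p (rcons s (inord 2))) /\
  (forall s t : node, p s -> p t -> ~ splitting p s -> ~ splitting p t ->
      size s = size t ->
      forall i : 'I_3, (i < 2)%N -> (p (rcons s i) <-> p (rcons t i))).

Definition inT (p : tree) : Prop := exists A, Tcond p A.

Definition Tle (q p : tree) : Prop := forall t, q t -> p t.

Definition body (q : tree) : pset := fun x => forall n, q (mkseq x n).

Definition T_nowhere_dense (X : pset) : Prop :=
  forall p, inT p -> exists q, inT q /\ Tle q p /\ forall x, body q x -> ~ X x.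

Definition T_meager (X : pset) : Prop :=
  exists Y : nat -> pset, (forall n, T_nowhere_dense (Y n)) /\
    (forall x, X x <-> exists n, Y n x).

Definition T_comeager (X : pset) : Prop := T_meager (fun x => ~ X x).

Definition T_measurable (X : pset) : Prop :=
  forall p, inT p -> exists q, inT q /\ Tle q p /\
    (T_meager (fun x => body q x /\ X x) \/
     T_meager (fun x => body q x /\ ~ X x)).

Definition Hset : pset := fun x => forall m, exists n, (m <= n)%N /\ nat_of_ord (x n) = 2.

(* Main.v *)
Require Import Defs.
From mathcomp Require Import all_boot zify.
From Stdlib Require Import Classical.
Set Implicit Arguments. Unset Strict Implicit. Unset Printing Implicit Defensive.

Lemma pre_take (a c : node) : prefix a c -> a = take (size a) c.
Proof. by rewrite prefixE => /eqP ->. Qed.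

Lemma pre_eq (a b c : node) : prefix a c -> prefix b c -> size a = size b -> a = b.
Proof. by move=> /pre_take Ha /pre_take Hb E; rewrite Ha Hb E. Qed.

Lemma pre_cmp (a b c : node) : prefix a c -> prefix b c -> prefix a b || prefix b a.
Proof.
move=> /pre_take Ha /pre_take Hb.
case: (leqP (size a) (size b)) => H.
  by apply/orP; left; rewrite prefixE Hb take_takel // -Ha.
by apply/orP; right; rewrite prefixE Ha take_takel ?(ltnW H) // -Hb.
Qed.

Lemma pre_rcons (t s : node) i : prefix t (rcons s i) -> t = rcons s i \/ prefix t s.
Proof.
move=> H; have Hs := size_prefix H; rewrite size_rcons leq_eqVlt in Hs.
case/orP: Hs => [E|Hl].
  left; have := pre_eq H (prefix_refl (rcons s i)). rewrite size_rcons (eqP E). by apply.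
right; rewrite prefixE; apply/eqP.
by rewrite {2}(pre_take H) -cats1 takel_cat.
Qed.

Lemma rcons_pre (s t : node) i : prefix (rcons s i) t -> prefix s t.
Proof. exact/prefix_trans/prefix_rcons. Qed.

Lemma mkseq_pre (x : point) n m : n <= m -> prefix (mkseq x n) (mkseq x m).
Proof.
move=> H; rewrite prefixE size_mkseq /mkseq -map_take take_iota.
by rewrite (minn_idPl H).
Qed.

Lemma mkseqSr (x : point) n : mkseq x n.+1 = rcons (mkseq x n) (x n).
Proof. exact: mkseqS. Qed.

Lemma pre_next (t c : node) : prefix t c -> size t < size c ->
  exists i, prefix (rcons t i) c.
Proof.
move=> Ht Hs; exists (nth ord0 c (size t)).
by rewrite {1}(pre_take Ht) -take_nth // prefix_take.
Qed.

Lemma min_split (p : tree) s : splitting p s ->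
  exists s0, splitting p s0 /\ forall s', splitting p s' -> size s0 <= size s'.
Proof.
move=> Hs; apply: NNPP => Hn.
have H : forall n s', size s' < n -> ~ splitting p s'.
  elim=> [//|n IH] s' Hlt Hsp; apply: Hn; exists s'; split=> // s'' Hs''.
  apply: NNPP => /negP Hle; apply: (IH s'' _ Hs''); rewrite -ltnNge in Hle; lia.
exact: (H (size s).+1 s (ltnSn _) Hs).
Qed.

Lemma below_stem (p : tree) s0 : perfect_tree p -> splitting p s0 ->
  (forall s, splitting p s -> size s0 <= size s) ->
  forall t, p t -> size t <= size s0 -> prefix t s0.
Proof.
move=> [Hroot [Hcl [Hpr Hsp]]] Hs0 Hmin.
elim/last_ind => [|t i IH] Ht Hsz; first exact: prefix0s.
have Ht' : p t by apply: Hcl Ht (prefix_rcons _ _).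
rewrite size_rcons in Hsz.
have Hpt := IH Ht' (ltnW Hsz).
have [j Hj] := pre_next Hpt Hsz.
have Htj : p (rcons t j) by apply: Hcl (proj1 Hs0) Hj.
case: (eqVneq i j) => [->//|Hij].
have : size s0 <= size t by apply: Hmin; split=> //; exists i, j.
lia.
Qed.

Lemma stem_ex (p : tree) s : perfect_tree p -> splitting p s ->
  exists s0, is_stem p s0 /\ size s0 <= size s.
Proof.
move=> Hp Hs; have [s0 [Hs0 Hmin]] := min_split Hs.
exists s0; split; last exact: Hmin.
split=> // t Ht.
case: (leqP (size t) (size s0)) => Hle; first by right; exact: (below_stem Hp Hs0 Hmin Ht Hle).
left.
have Htk : p (take (size s0) t) by case: Hp => _ [Hcl _]; apply: Hcl Ht (prefix_take _ _).
have := below_stem Hp Hs0 Hmin Htk.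
rewrite size_take Hle leqnn => /(_ isT) Hpre.
have E : take (size s0) t = s0.
  apply: (pre_eq Hpre (prefix_refl s0)); by rewrite size_take Hle.
by rewrite prefixE E.
Qed.

Lemma level_ex (p : tree) : perfect_tree p -> forall m, exists t, p t /\ size t = m.
Proof.
move=> [Hroot [Hcl [Hpr Hsp]]]; elim=> [|m [t [Ht Hs]]]; first by exists [::].
have [i Hi] := Hpr t Ht; exists (rcons t i); by rewrite size_rcons Hs.
Qed.

Lemma split_above (p : tree) : perfect_tree p -> forall m, exists s, splitting p s /\ m <= size s.
Proof.
move=> Hp m; have [t [Ht Hs]] := level_ex Hp m.
case: Hp => [_ [_ [_ Hsp]]]; have [s [Hts Hs']] := Hsp t Ht.
by exists s; split=> //; rewrite -Hs; apply: size_prefix.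
Qed.

Definition restr (p : tree) (s2 : node) : tree :=
  fun t => p t /\ (prefix t s2 || prefix s2 t).

Lemma restr_ext (p : tree) s2 t : prefix s2 t -> (restr p s2 t <-> p t).
Proof. by move=> H; split => [[]//|Ht]; split=> //; rewrite H orbT. Qed.

Lemma restr_split (p : tree) s2 t : prefix s2 t -> (splitting (restr p s2) t <-> splitting p t).
Proof.
move=> H; have Hr : forall i, restr p s2 (rcons t i) <-> p (rcons t i).
  by move=> i; apply: restr_ext; apply: prefix_trans H (prefix_rcons _ _).
split=> [[Ht [i [j [Hij [Hi Hj]]]]]|[Ht [i [j [Hij [Hi Hj]]]]]].
  by split; [apply/(restr_ext _ H)|exists i, j; rewrite -!Hr].
by split; [apply/(restr_ext _ H)|exists i, j; rewrite !Hr].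
Qed.

Lemma restr_big (p : tree) s2 t : restr p s2 t -> size s2 <= size t -> prefix s2 t.
Proof.
move=> [_ /orP [H|H]] Hs //.
have Hs' := size_prefix H.
have E : t = s2 by apply: (pre_eq H (prefix_refl _)); apply/eqP; rewrite eqn_leq Hs Hs'.
by rewrite E prefix_refl.
Qed.

Lemma restr_small (p : tree) s2 t : restr p s2 t -> ~~ prefix s2 t -> size t < size s2.
Proof.
move=> Ht Hn; rewrite ltnNge; apply/negP => Hs; by rewrite (restr_big Ht Hs) in Hn.
Qed.

Lemma pre_swap (a b : node) : prefix a b -> size b <= size a -> prefix b a.
Proof.
move=> H Hs; have Hs' := size_prefix H.
have E : a = b by apply: (pre_eq H (prefix_refl _)); apply/eqP; rewrite eqn_leq Hs Hs'.
by rewrite E prefix_refl.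
Qed.

Lemma restr_nosplit (p : tree) s2 t : restr p s2 t -> ~~ prefix s2 t -> ~ splitting (restr p s2) t.
Proof.
move=> Ht Hn [_ [i [j [Hij [Hi Hj]]]]].
have Hs := restr_small Ht Hn.
have Pi : prefix (rcons t i) s2.
  case: (Hi) => _ /orP [//|H]; apply: pre_swap H _; by rewrite size_rcons.
have Pj : prefix (rcons t j) s2.
  case: (Hj) => _ /orP [//|H]; apply: pre_swap H _; by rewrite size_rcons.
have E : rcons t i = rcons t j by apply: (pre_eq Pi Pj); rewrite !size_rcons.
have E2 : i = j by move: E; apply: rcons_injr.
by rewrite E2 eqxx in Hij.
Qed.

Lemma restr_split_ext (p : tree) s2 t : splitting (restr p s2) t -> prefix s2 t.
Proof.
move=> Hs; case: (boolP (prefix s2 t)) => // Hn.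
by case: (restr_nosplit (proj1 Hs) Hn Hs).
Qed.

Lemma restr_Tcond (p : tree) A s : Tcond p A -> splitting p s ->
  Tcond (restr p (rcons s (inord 2))) (fun n => A n /\ size s < n).
Proof.
set s2 := rcons s (inord 2).
move=> HT Hs; have HT' := HT.
case: HT' => [[Hroot [Hcl [Hpr Hsp]]] [HA [Hfull [Hstem Hunif]]]].
have Hs2 : p s2 by apply: Hfull.
have Hsz2 : size s2 = (size s).+1 by rewrite size_rcons.
have Hq : forall t, restr p s2 t -> p t by move=> t [].
split; [split; [|split; [|split]]|split; [|split; [|split]]].
- by split=> //; rewrite prefix0s.
- move=> u t [Ht HH] Hut; split; first by apply: Hcl Ht Hut.
  case/orP: HH => H; first by rewrite (prefix_trans Hut H).
  exact: (pre_cmp Hut H).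
- move=> t Ht; case: (boolP (prefix s2 t)) => H.
    have [i Hi] := Hpr t (Hq t Ht); exists i; apply/(restr_ext _ (prefix_trans H (prefix_rcons _ _))) => //.
  have Hlt := restr_small Ht H.
  have Hts : prefix t s2 by case: Ht => _ /orP [//|H']; rewrite H' in H.
  have [i Hi] := pre_next Hts Hlt.
  by exists i; split; [apply: Hcl Hs2 Hi|rewrite Hi].
- move=> t Ht; case: (boolP (prefix s2 t)) => H.
    have [w [Htw Hw]] := Hsp t (Hq t Ht).
    exists w; split=> //; apply/(restr_split _ (prefix_trans H Htw)) => //.
  have Hts : prefix t s2 by case: Ht => _ /orP [//|H']; rewrite H' in H.
  have [w [Htw Hw]] := Hsp s2 Hs2.
  exists w; split; first by apply: prefix_trans Hts Htw.
  by apply/(restr_split _ Htw).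
- move=> t Ht; case: (boolP (prefix s2 t)) => H.
    have := size_prefix H; rewrite Hsz2 => Hl.
    rewrite restr_split // -HA; last exact: Hq.
    by split=> [[]//|HA']; split.
  have Hlt := restr_small Ht H.
  split=> [[_ Hl]|Hsp']; first by rewrite Hsz2 ltnS in Hlt; have := leq_trans Hl Hlt; rewrite ltnn.
  by case: (restr_nosplit Ht H Hsp').
- move=> t Hst i; have H := restr_split_ext Hst.
  have Hps : splitting p t by apply/(restr_split _ H).
  apply/(restr_ext _ (prefix_trans H (prefix_rcons _ _))); exact: Hfull.
- move=> st s' [Hst _] Hs' Hpre Hns Hq2.
  have H := prefix_trans (restr_split_ext Hst) Hpre.
  have Hnp : ~ splitting p s' by move=> Hp'; apply: Hns; apply/(restr_split _ H).
  have [s0 [Hstem0 Hsz0]] := stem_ex (proj1 HT) Hs.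
  have Hs0s' : prefix s0 s'.
    case: (Hstem0) => _ /(_ s' (Hq _ Hs')) [//|Hle].
    exfalso; have h1 := leq_trans (size_prefix Hle) Hsz0.
    have h2 := size_prefix H; rewrite Hsz2 in h2.
    by have := leq_trans h2 h1; rewrite ltnn.
  by apply: (Hstem s0 s' Hstem0 (Hq _ Hs') Hs0s' Hnp); case: Hq2.
- move=> s1 t1 Hs1 Ht1 Hns1 Hnt1 Hsz i Hi.
  case: (leqP (size s2) (size s1)) => Hl.
    have H1 := restr_big Hs1 Hl.
    have H2 : prefix s2 t1 by apply: (restr_big Ht1); rewrite -Hsz.
    rewrite (restr_ext _ (prefix_trans H1 (prefix_rcons _ _))).
    rewrite (restr_ext _ (prefix_trans H2 (prefix_rcons _ _))).
    apply: Hunif => //; [exact: Hq|exact: Hq| |].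
      by move=> Hp'; apply: Hns1; apply/(restr_split _ H1).
    by move=> Hp'; apply: Hnt1; apply/(restr_split _ H2).
  have P1 : prefix s1 s2.
    case: (Hs1) => _ /orP [//|H']; by have := leq_trans Hl (size_prefix H'); rewrite ltnn.
  have P2 : prefix t1 s2.
    case: (Ht1) => _ /orP [//|H']; by have := leq_trans Hl (size_prefix H'); rewrite Hsz ltnn.
  by rewrite (pre_eq P1 P2 Hsz).
Qed.

Lemma Y_nd m : T_nowhere_dense (fun x => forall n, m <= n -> nat_of_ord (x n) <> 2).
Proof.
move=> p [A HT].
have [s [Hs Hm]] := split_above (proj1 HT) m.
exists (restr p (rcons s (inord 2))); split; first by exists (fun n => A n /\ size s < n); exact: restr_Tcond.
split; first by move=> t [].
move=> x Hx Hy.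
have Hb := Hx (size s).+1.
have Hp : prefix (rcons s (inord 2)) (mkseq x (size s).+1).
  by apply: (restr_big Hb); rewrite size_rcons size_mkseq.
have E : rcons s (inord 2) = mkseq x (size s).+1.
  by apply: (pre_eq Hp (prefix_refl _)); rewrite size_rcons size_mkseq.
have := congr1 (last ord0) E; rewrite mkseqS !last_rcons => E2.
by apply: (Hy (size s) Hm); rewrite -E2 inordK.
Qed.

Lemma nd_sub (Y Y' : pset) : T_nowhere_dense Y -> (forall x, Y' x -> Y x) -> T_nowhere_dense Y'.
Proof.
move=> H Hs p Hp; have [q [Hq [Hle Hb]]] := H p Hp.
by exists q; split=> //; split=> // x /Hb Hn /Hs.
Qed.

Lemma nd_union (Y Z : pset) : T_nowhere_dense Y -> T_nowhere_dense Z ->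
  T_nowhere_dense (fun x => Y x \/ Z x).
Proof.
move=> HY HZ p Hp; have [q1 [Hq1 [Hle1 Hb1]]] := HY p Hp.
have [q2 [Hq2 [Hle2 Hb2]]] := HZ q1 Hq1.
exists q2; split=> //; split; first by move=> t /Hle2 /Hle1.
move=> x Hx [H|H]; last exact: Hb2 Hx H.
by apply: (Hb1 x) H => n; apply: Hle2.
Qed.

Lemma meager_sub (X Z : pset) : T_meager Z -> (forall x, X x -> Z x) -> T_meager X.
Proof.
move=> [Y [HY HZ]] Hs; exists (fun n x => Y n x /\ X x); split.
  by move=> n; apply: nd_sub (HY n) _ => x [].
move=> x; split=> [Hx|[n [_ Hx]]] //.
by have [n Hn] := (proj1 (HZ x)) (Hs x Hx); exists n.
Qed.

Lemma meager_union (X Z : pset) : T_meager X -> T_meager Z -> T_meager (fun x => X x \/ Z x).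
Proof.
move=> [Y [HY HX]] [Y' [HY' HZ]]; exists (fun n x => Y n x \/ Y' n x); split.
  by move=> n; apply: nd_union.
move=> x; split.
  case=> [/HX [n Hn]|/HZ [n Hn]]; exists n; tauto.
case=> n [Hn|Hn]; [left; apply/HX|right; apply/HZ]; by exists n.
Qed.

Lemma compH_meager : T_meager (fun x => ~ Hset x).
Proof.
exists (fun m x => forall n, m <= n -> nat_of_ord (x n) <> 2); split; first exact: Y_nd.
move=> x; split.
  move=> Hn; have [m Hm] := not_all_ex_not _ _ Hn; exists m => n Hmn Hx2.
  by apply: Hm; exists n.
move=> [m Hm] Hh; have [n [Hmn Hx]] := Hh m; exact: Hm n Hmn Hx.
Qed.

Theorem mainTheorem9 :
  T_comeager Hset /\
  (forall X : pset, T_measurable X <-> T_measurable (fun x => X x /\ Hset x)).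
Proof.
split; first exact: compH_meager.
move=> X; split=> HM p Hp; have [q [Hq [Hle Hc]]] := HM p Hp;
  exists q; split=> //; split=> //.
- case: Hc => Hc; [left|right].
    by apply: meager_sub Hc _ => x [Hb [HX _]].
  apply: meager_sub (meager_union Hc compH_meager) _ => x [Hb Hn].
  case: (classic (X x)) => HX; first by right => HH; apply: Hn.
  by left.
- case: Hc => Hc; [left|right].
    apply: meager_sub (meager_union Hc compH_meager) _ => x [Hb HX].
    by case: (classic (Hset x)) => HH; [left|right].
  by apply: meager_sub Hc _ => x [Hb HX]; split=> // -[].
Qed.
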